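(* Let $m\ge2$, $f_1,\dots,f_m:X\to\mathbb R_{+\infty}$, $x\in\bigcap_{i=1}^m\operatorname{dom} f_i$, and suppose the zero function $0$ belongs to $\mathcal L$. The following are equivalent: (i) $0\in\bigcap_{\varepsilon>0}\sum_{i=1}^m\partial_\varepsilon f_i(x)$; (ii) $\left(\sum_{i=1}^m f_i\right)^*(0)=(f_1^*\square\cdots\square f_m^* )(0)<+\infty$, and $x$ minimizes $\sum_{i=1}^m f_i$ over $X$.
   Context: $X$ is a nonempty set; $\mathbb R_{+\infty}=\mathbb R\cup\{+\infty\}$. A space of abstract linear functions is a family $\mathcal L$ of functions $l:X\to\mathbb R$ such that (a) $l_1,l_2\in\mathcal L$ implies $l_1+l_2\in\mathcal L$, and (b) for every $l\in\mathcal L$ and $m\in\mathbb N$ there exist $l_1,\dots,l_m\in\mathcal L$ with $l=l_1+\dots+l_m$. For $f:X\to\mathbb R_{+\infty}$: $\operatorname{dom} f=\{x:f(x)<+\infty\}$; $f^*(l)=\sup_{x\in X}(l(x)-f(x))$. Infimal convolution: $(g_1\square\cdots\square g_m)(l)=\inf\{\sum_i g_i(l_i):l_i\in\mathcal L,\ \sum_i l_i=l\}$. For $\varepsilon\ge0$ and $x\in\operatorname{dom} f$, $\partial_\varepsilon f(x)=\{l\in\mathcal L: f(y)-f(x)-(l(y)-l(x))+\varepsilon\ge0\ \forall y\in X\}$. Sums of subsets of $\mathcal L$ are Minkowski sums. *)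

(* Defs.v *)
From Stdlib Require Import Reals.
Open Scope R_scope.

Inductive Rpinf : Type := PFin (r : R) | PInf.

Definition Rpinf_le (a b : Rpinf) : Prop :=
  match a, b with
  | _, PInf => True
  | PInf, PFin _ => False
  | PFin x, PFin y => x <= y
  end.

Definition Rpinf_plus (a b : Rpinf) : Rpinf :=
  match a, b with
  | PFin x, PFin y => PFin (x + y)
  | _, _ => PInf
  end.

Inductive Rbar : Type := Fin (r : R) | Pinf | Minf.

Definition Rbar_le (a b : Rbar) : Prop :=
  match a, b with
  | Minf, _ => True
  | _, Pinf => True
  | Pinf, _ => False
  | _, Minf => False
  | Fin x, Fin y => x <= y
  end.

Definition Rbar_lt (a b : Rbar) : Prop := Rbar_le a b /\ a <> b.

(* inf-addition convention: (+oo) + (-oo) = +oo *)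
Definition Rbar_plus (a b : Rbar) : Rbar :=
  match a, b with
  | Pinf, _ | _, Pinf => Pinf
  | Minf, _ | _, Minf => Minf
  | Fin x, Fin y => Fin (x + y)
  end.

Definition minus_Rpinf (r : R) (a : Rpinf) : Rbar :=
  match a with PFin y => Fin (r - y) | PInf => Minf end.

Definition is_sup_Rbar (S : Rbar -> Prop) (v : Rbar) : Prop :=
  (forall s, S s -> Rbar_le s v) /\
  (forall u, (forall s, S s -> Rbar_le s u) -> Rbar_le v u).

Definition is_inf_Rbar (S : Rbar -> Prop) (v : Rbar) : Prop :=
  (forall s, S s -> Rbar_le v s) /\
  (forall u, (forall s, S s -> Rbar_le u s) -> Rbar_le u v).

(* finite sums over indices 0 .. k-1 *)
Fixpoint sumR (k : nat) (a : nat -> R) : R :=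
  match k with O => 0 | S k' => sumR k' a + a k' end.

Fixpoint sumRpinf (k : nat) (a : nat -> Rpinf) : Rpinf :=
  match k with O => PFin 0 | S k' => Rpinf_plus (sumRpinf k' a) (a k') end.

Fixpoint sumRbar (k : nat) (a : nat -> Rbar) : Rbar :=
  match k with O => Fin 0 | S k' => Rbar_plus (sumRbar k' a) (a k') end.

Section Abstract.
Variable X : Type.

Definition abstract_linear_space (L : (X -> R) -> Prop) : Prop :=
  (forall l1 l2, L l1 -> L l2 -> L (fun y => l1 y + l2 y)) /\
  (forall l (k : nat), L l -> (1 <= k)%nat ->
     exists ls : nat -> X -> R,
       (forall i, (i < k)%nat -> L (ls i)) /\
       (forall y, l y = sumR k (fun i => ls i y))).

Definition in_dom (f : X -> Rpinf) (x : X) : Prop :=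
  exists r, f x = PFin r.

Definition conj_value (f : X -> Rpinf) (l : X -> R) (v : Rbar) : Prop :=
  is_sup_Rbar (fun s => exists y, s = minus_Rpinf (l y) (f y)) v.

Definition infconv_conj_value (L : (X -> R) -> Prop) (m : nat)
    (f : nat -> X -> Rpinf) (l : X -> R) (v : Rbar) : Prop :=
  is_inf_Rbar
    (fun s => exists (ls : nat -> X -> R) (vs : nat -> Rbar),
        (forall i, (i < m)%nat -> L (ls i)) /\
        (forall y, l y = sumR m (fun i => ls i y)) /\
        (forall i, (i < m)%nat -> conj_value (f i) (ls i) (vs i)) /\
        s = sumRbar m vs)
    v.

Definition eps_subdiff (L : (X -> R) -> Prop) (eps : R) (f : X -> Rpinf)
    (x : X) (l : X -> R) : Prop :=
  L l /\
  match f x with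
  | PInf => False
  | PFin fx => forall y, match f y with
                         | PInf => True
                         | PFin fy => 0 <= fy - fx - (l y - l x) + eps
                         end
  end.

Definition sum_fun (m : nat) (f : nat -> X -> Rpinf) : X -> Rpinf :=
  fun y => sumRpinf m (fun i => f i y).

End Abstract.

(* Main.v *)
Require Import Defs.
From Stdlib Require Import Reals Lra Lia Classical ClassicalEpsilon.
Open Scope R_scope.

Definition fv (a : Rpinf) : R := match a with PFin r => r | PInf => 0 end.
Definition fvb (a : Rbar) : R := match a with Fin r => r | _ => 0 end.

Lemma sumRpinf_fin k a : (forall i, (i<k)%nat -> a i = PFin (fv (a i))) ->
  sumRpinf k a = PFin (sumR k (fun i => fv (a i))).
Proof.
  induction k; intros H; simpl; auto.
  rewrite IHk by (intros; apply H; lia). rewrite (H k) by lia. reflexivity.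
Qed.

Lemma sumRpinf_inf k a i : (i<k)%nat -> a i = PInf -> sumRpinf k a = PInf.
Proof.
  induction k; intros Hi Ha; [lia|]. simpl.
  destruct (Nat.eq_dec i k) as [->|Hne].
  - rewrite Ha. destruct (sumRpinf k a); reflexivity.
  - rewrite IHk by (lia || auto). reflexivity.
Qed.

Lemma sumRbar_cases k vs : (forall i, (i<k)%nat -> vs i <> Minf) ->
  sumRbar k vs = Pinf \/
  ((forall i, (i<k)%nat -> vs i = Fin (fvb (vs i))) /\
   sumRbar k vs = Fin (sumR k (fun i => fvb (vs i)))).
Proof.
  induction k; intros H; simpl.
  - right; split; [intros; lia| reflexivity].
  - destruct IHk as [E|[E1 E2]]; [intros; apply H; lia| |].
    + left. rewrite E. reflexivity.
    + rewrite E2. specialize (H k). destruct (vs k) eqn:Ek.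
      * right. split; [|reflexivity]. intros i Hi.
        destruct (Nat.eq_dec i k) as [Hik|Hik]; [subst i; rewrite Ek; reflexivity| apply E1; lia].
      * left; reflexivity.
      * exfalso; apply H; auto.
Qed.

Lemma sumR_ext k a b : (forall i, (i<k)%nat -> a i = b i) -> sumR k a = sumR k b.
Proof. induction k; intros H; simpl; auto. rewrite (H k) by lia. rewrite IHk; auto. Qed.

Lemma sumR_plus k a b : sumR k (fun i => a i + b i) = sumR k a + sumR k b.
Proof. induction k; simpl; [lra|]. rewrite IHk. lra. Qed.

Lemma sumR_minus k a b : sumR k (fun i => a i - b i) = sumR k a - sumR k b.
Proof. induction k; simpl; [lra|]. rewrite IHk. lra. Qed.

Lemma sumR_const k c : sumR k (fun _ => c) = INR k * c.
Proof. induction k; simpl sumR; [simpl; lra|]. rewrite IHk, S_INR. lra. Qed.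

Lemma sumR_le k a b : (forall i, (i<k)%nat -> a i <= b i) -> sumR k a <= sumR k b.
Proof. induction k; intros H; simpl; [lra|]. pose proof (H k ltac:(lia)).
  pose proof (IHk ltac:(intros; apply H; lia)). lra. Qed.

Lemma sumR_term k a j : (forall i, (i<k)%nat -> 0 <= a i) -> (j<k)%nat -> a j <= sumR k a.
Proof.
  induction k; intros H Hj; [lia|]. simpl.
  assert (0 <= sumR k a).
  { pose proof (sumR_le k (fun _ => 0) a ltac:(intros; apply H; lia)) as Hs.
    rewrite sumR_const in Hs. lra. }
  destruct (Nat.eq_dec j k) as [->|]; [lra|].
  pose proof (IHk ltac:(intros; apply H; lia) ltac:(lia)). pose proof (H k ltac:(lia)). lra.
Qed.

Lemma sup_exists (S : Rbar -> Prop) a b : S (Fin a) -> (forall s, S s -> Rbar_le s (Fin b)) ->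
  {c | is_sup_Rbar S (Fin c) /\ c <= b}.
Proof.
  intros Ha Hb.
  destruct (completeness (fun r => S (Fin r))) as [c [Hc1 Hc2]].
  - exists b. intros r Hr. apply (Hb _ Hr).
  - exists a; auto.
  - exists c. split.
    + split.
      * intros s Hs. destruct s; simpl; [apply Hc1; auto | apply (Hb _ Hs) | auto].
      * intros u Hu. destruct u; simpl.
        -- apply Hc2. intros r' Hr'. apply (Hu _ Hr').
        -- auto.
        -- apply (Hu _ Ha).
    + apply Hc2. intros r Hr. apply (Hb _ Hr).
Qed.

Lemma Rbar_le_antisym a b : Rbar_le a b -> Rbar_le b a -> a = b.
Proof. destruct a, b; simpl; intros; try tauto; f_equal; lra. Qed.

Lemma le_fin_notminf a v : Rbar_le (Fin a) v -> v <> Minf.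
Proof. destruct v; simpl; congruence || tauto. Qed.

Lemma sumRbar_fin k a : sumRbar k (fun i => Fin (a i)) = Fin (sumR k a).
Proof. induction k; simpl; auto. rewrite IHk. reflexivity. Qed.

Lemma aux_lt n a : 0 < a -> 0 <= n -> n * (a / (n + 1)) < a.
Proof. intros Ha Hn. replace (n * (a / (n+1))) with (a - a/(n+1)) by (field; lra).
  assert (0 < a / (n+1)) by (apply Rdiv_lt_0_compat; lra). lra. Qed.

Lemma conj_ge X (f : X -> Rpinf) l v y fy : conj_value X f l v -> f y = PFin fy ->
  Rbar_le (Fin (l y - fy)) v.
Proof. intros [H _] E. apply H. exists y. rewrite E. reflexivity. Qed.

Theorem mainTheorem6 (X : Type) (L : (X -> R) -> Prop)
  (HL : abstract_linear_space X L) (HX : inhabited X)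
  (m : nat) (Hm : (2 <= m)%nat) (f : nat -> X -> Rpinf) (x : X)
  (Hx : forall i, (i < m)%nat -> in_dom X (f i) x)
  (H0 : L (fun _ => 0)) :
  (forall eps, 0 < eps ->
     exists ls : nat -> X -> R,
       (forall i, (i < m)%nat -> eps_subdiff X L eps (f i) x (ls i)) /\
       (forall y, 0 = sumR m (fun i => ls i y)))
  <->
  ((exists v : Rbar,
      conj_value X (sum_fun X m f) (fun _ => 0) v /\
      infconv_conj_value X L m f (fun _ => 0) v /\
      Rbar_lt v Pinf) /\
   (forall y, Rpinf_le (sum_fun X m f x) (sum_fun X m f y))).
Proof.
  set (ax := fun i => fv (f i x)).
  assert (HxF : forall i, (i<m)%nat -> f i x = PFin (ax i)).
  { intros i Hi. destruct (Hx i Hi) as [r Hr]. unfold ax. rewrite Hr. reflexivity. }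
  set (Fx := sumR m ax).
  assert (HFx : sum_fun X m f x = PFin Fx).
  { unfold sum_fun. apply sumRpinf_fin. intros i Hi. apply HxF; auto. }
  assert (Hy : forall y, sum_fun X m f y = PInf \/
     ((forall i, (i<m)%nat -> f i y = PFin (fv (f i y))) /\
      sum_fun X m f y = PFin (sumR m (fun i => fv (f i y))))).
  { intros y. destruct (classic (exists i, (i<m)%nat /\ f i y = PInf)) as [[i [Hi E]]|N].
    - left. unfold sum_fun. apply (sumRpinf_inf _ _ i); auto.
    - right. assert (A : forall i, (i<m)%nat -> f i y = PFin (fv (f i y))).
      { intros i Hi. destruct (f i y) eqn:E; auto. exfalso; apply N; eauto. }
      split; auto. unfold sum_fun. apply sumRpinf_fin. auto. }
  assert (Hconj : (forall y, Rpinf_le (sum_fun X m f x) (sum_fun X m f y)) ->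
     conj_value X (sum_fun X m f) (fun _ => 0) (Fin (- Fx))).
  { intros Hmin. split.
    - intros s [y ->]. specialize (Hmin y). rewrite HFx in Hmin.
      destruct (sum_fun X m f y); simpl in *; auto. lra.
    - intros u Hu. specialize (Hu (Fin (0 - Fx))). rewrite Rminus_0_l in Hu. apply Hu.
      exists x. rewrite HFx. simpl. f_equal. ring. }
  split.
  - intros Hi.
    assert (Hmin : forall y, Rpinf_le (sum_fun X m f x) (sum_fun X m f y)).
    { intros y. rewrite HFx. destruct (Hy y) as [E|[A E]]; rewrite E; simpl; auto.
      apply Rnot_lt_le. intros Hlt.
      set (e := (Fx - sumR m (fun i => fv (f i y))) / (INR m + 1)).
      assert (He : 0 < e) by (unfold e; apply Rdiv_lt_0_compat; [lra| pose proof (pos_INR m); lra]).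
      destruct (Hi e He) as [ls [Hs Hsum]].
      assert (K : sumR m (fun i => 0) <= sumR m (fun i => fv (f i y) - ax i - (ls i y - ls i x) + e)).
      { apply sumR_le. intros i Hi'. destruct (Hs i Hi') as [_ Hsi]. rewrite (HxF i Hi') in Hsi.
        specialize (Hsi y). rewrite (A i Hi') in Hsi. exact Hsi. }
      rewrite sumR_const, sumR_plus, !sumR_minus, sumR_const in K.
      rewrite <- Hsum, <- Hsum in K. fold Fx in K.
      assert (INR m * e < Fx - sumR m (fun i => fv (f i y))).
      { unfold e. pose proof (pos_INR m). apply aux_lt; lra. }
      lra. }
    split; auto.
    exists (Fin (-Fx)). split; [apply Hconj; auto|]. split; [|split; simpl; [auto|congruence]].
    split.
    + intros s [ls [vs [HLs [Hsum [Hc ->]]]]].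
      assert (Hge : forall i, (i<m)%nat -> Rbar_le (Fin (ls i x - ax i)) (vs i)).
      { intros i Hi'. apply (conj_ge X (f i) (ls i) (vs i) x); auto. }
      destruct (sumRbar_cases m vs) as [E|[A E]].
      { intros i Hi'. apply (le_fin_notminf _ _ (Hge i Hi')). }
      * rewrite E. simpl. auto.
      * rewrite E. simpl.
        assert (K : sumR m (fun i => ls i x - ax i) <= sumR m (fun i => fvb (vs i))).
        { apply sumR_le. intros i Hi'. specialize (Hge i Hi'). rewrite (A i Hi') in Hge. exact Hge. }
        rewrite sumR_minus, <- Hsum in K. fold Fx in K. lra.
    + intros u Hu.
      assert (Happ : forall e, 0 < e -> exists w, Rbar_le u (Fin w) /\ w <= - Fx + INR m * e).
      { intros e He. destruct (Hi e He) as [ls [Hs Hsum]].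
        assert (Hw : forall i, exists w, (i<m)%nat ->
            conj_value X (f i) (ls i) (Fin w) /\ w <= ls i x - ax i + e).
        { intros i. destruct (Compare_dec.lt_dec i m) as [Hi'|Hi']; [|exists 0; intros; lia].
          destruct (Hs i Hi') as [_ Hsi]. rewrite (HxF i Hi') in Hsi.
          destruct (sup_exists (fun s => exists y, s = minus_Rpinf (ls i y) (f i y))
                     (ls i x - ax i) (ls i x - ax i + e)) as [c [Hc1 Hc2]].
          - exists x. rewrite (HxF i Hi'). reflexivity.
          - intros s [y ->]. specialize (Hsi y). destruct (f i y); simpl; auto. lra.
          - exists c. intros _. split; auto. }
        set (w := fun i => proj1_sig (constructive_indefinite_description _ (Hw i))).
        assert (Hwp : forall i, (i<m)%nat ->
            conj_value X (f i) (ls i) (Fin (w i)) /\ w i <= ls i x - ax i + e).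
        { intros i Hi'. unfold w. destruct (constructive_indefinite_description _ (Hw i)); simpl; auto. }
        exists (sumR m w). split.
        - assert (E : sumRbar m (fun i => Fin (w i)) = Fin (sumR m w)).
          { apply sumRbar_fin. }
          rewrite <- E. apply Hu. exists ls, (fun i => Fin (w i)).
          split; [intros i Hi'; apply (Hs i Hi')|]. split; [exact Hsum|].
          split; [intros i Hi'; apply Hwp; auto| reflexivity].
        - assert (K : sumR m w <= sumR m (fun i => ls i x - ax i + e)).
          { apply sumR_le. intros i Hi'. apply Hwp; auto. }
          rewrite sumR_plus, sumR_minus, sumR_const, <- Hsum in K. fold Fx in K. lra. }
      destruct u; simpl; auto.
      * apply Rnot_lt_le. intros Hlt.
        set (e := (r + Fx) / (INR m + 1)).
        assert (He : 0 < e) by (unfold e; apply Rdiv_lt_0_compat; [lra| pose proof (pos_INR m); lra]).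
        destruct (Happ e He) as [w [Hw1 Hw2]]. simpl in Hw1.
        assert (INR m * e < r + Fx).
        { unfold e. pose proof (pos_INR m). apply aux_lt; lra. }
        lra.
      * destruct (Happ 1 Rlt_0_1) as [w [Hw1 _]]. exact Hw1.
  - intros [[v [Hv [Hinf Hlt]]] Hmin] eps Heps.
    assert (Ev : v = Fin (- Fx)).
    { apply Rbar_le_antisym.
      - apply (proj2 Hv). apply (proj1 (Hconj Hmin)).
      - apply (proj2 (Hconj Hmin)). apply (proj1 Hv). }
    subst v.
    destruct (classic (exists ls vs, (forall i, (i < m)%nat -> L (ls i)) /\
        (forall y, 0 = sumR m (fun i => ls i y)) /\
        (forall i, (i < m)%nat -> conj_value X (f i) (ls i) (vs i)) /\
        ~ Rbar_le (Fin (- Fx + eps)) (sumRbar m vs))) as [[ls [vs [HLs [Hsum [Hc Hn]]]]]|N].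
    2: { exfalso. assert (Rbar_le (Fin (- Fx + eps)) (Fin (- Fx))).
         { apply (proj2 Hinf). intros s [ls [vs [A [B [C ->]]]]].
           apply NNPP. intros D. apply N. exists ls, vs. auto. }
         simpl in H. lra. }
    assert (Hge : forall i, (i<m)%nat -> Rbar_le (Fin (ls i x - ax i)) (vs i)).
    { intros i Hi'. apply (conj_ge X (f i) (ls i) (vs i) x); auto. }
    destruct (sumRbar_cases m vs) as [E|[A E]].
    { intros i Hi'. apply (le_fin_notminf _ _ (Hge i Hi')). }
    { rewrite E in Hn. simpl in Hn. tauto. }
    rewrite E in Hn. simpl in Hn. apply Rnot_le_lt in Hn.
    set (d := fun i => fvb (vs i) - (ls i x - ax i)).
    assert (Hd0 : forall i, (i<m)%nat -> 0 <= d i).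
    { intros i Hi'. specialize (Hge i Hi'). rewrite (A i Hi') in Hge. simpl in Hge. unfold d. lra. }
    assert (Hds : sumR m d < eps).
    { unfold d. rewrite sumR_minus, sumR_minus, <- Hsum. fold Fx. lra. }
    exists ls. split; auto.
    intros j Hj. unfold eps_subdiff. split; [apply HLs; auto|]. rewrite (HxF j Hj). intros y. destruct (f j y) eqn:Ey; [|exact I].
    pose proof (conj_ge X (f j) (ls j) (vs j) y r (Hc j Hj) Ey) as H1. rewrite (A j Hj) in H1. simpl in H1.
    pose proof (sumR_term m d j Hd0 Hj) as H2. unfold d in H2, Hds. lra.
Qed.
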